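(* Let $d\ge1$ and let $G:\mathbb{R}^d\to\mathbb{R}$ satisfy: $G\ge 0$ and $\mathrm{supp}(G)=\mathbb{R}^d$; $G\in W^{1,1}(\mathbb{R}^d)\cap L^\infty(\mathbb{R}^d)\cap C^2(\mathbb{R}^d)$; $G(x)=g(|x|)$ with $g'(r)<0$ for all $r>0$, $g''(0)<0$, $\lim_{r\to+\infty}g(r)=0$; and $\int_{\mathbb{R}^d}G\,dx=1$. Let $0<\varepsilon<1$ and $$E[\rho]=\frac{\varepsilon}{2}\int_{\mathbb{R}^d}\rho^2\,dx-\frac12\int_{\mathbb{R}^d}\int_{\mathbb{R}^d}G(x-y)\rho(x)\rho(y)\,dy\,dx.$$ Then $\inf_{\rho\in\mathcal{P}\cap L^2(\mathbb{R}^d)}E[\rho]<0$.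
   Context: $\mathcal{P}=\{\rho\in L^1(\mathbb{R}^d):\rho\ge0,\ \int_{\mathbb{R}^d}\rho\,dx=1\}$. $\varepsilon>0$ is a diffusion constant. *)

(* Defs.v *)
From mathcomp Require Import all_boot all_algebra.
From mathcomp Require Import all_classical all_reals all_analysis.
Import numFieldNormedType.Exports.
Import GRing.Theory Num.Theory.

Set Implicit Arguments.
Unset Strict Implicit.
Unset Printing Implicit Defensive.

Local Open Scope classical_set_scope.
Local Open Scope ring_scope.

Section Defs.
Variable R : realType.

(* Iterated Lebesgue integral of a [0,+oo]-valued function of the first n
   real coordinates: integrate coordinate n-1 last (outermost).  For
   nonnegative Borel functions this is the Lebesgue integral on R^n
   (Tonelli). *)
Fixpoint iint (n : nat) (f : (nat -> R) -> \bar R) : \bar R :=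
  match n with
  | 0 => f (fun _ => 0)
  | n'.+1 => (\int[@lebesgue_measure R]_t
                iint n' (fun x => f (fun k => if k == n' then t else x k)))%E
  end.

Definition intRd (d : nat) (F : 'rV[R]_d -> \bar R) : \bar R :=
  iint d (fun x => F (\row_(i < d) x i)).

Definition enorm (d : nat) (x : 'rV[R]_d) : R :=
  Num.sqrt (\sum_(i < d) x ord0 i ^+ 2).

Definition evec (d : nat) (i : 'I_d) : 'rV[R]_d := delta_mx ord0 i.

Definition borel_fun (d : nat) (f : 'rV[R]_d -> R) : Prop :=
  forall B : set R, open B -> <<s [set: 'rV[R]_d], open >> (f @^-1` B).

Definition C2 (d : nat) (f : 'rV[R]_d -> R) : Prop :=
  continuous f /\
  (forall i x, derivable f x (evec i)) /\
  (forall i, continuous ('D_(evec i) f)) /\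
  (forall i j x, derivable ('D_(evec j) f) x (evec i)) /\
  (forall i j, continuous ('D_(evec i) ('D_(evec j) f))).

(* G in W^{1,1}(R^d) for a C^1 function G: G and its (classical = weak)
   partial derivatives are integrable. *)
Definition W11 (d : nat) (f : 'rV[R]_d -> R) : Prop :=
  (intRd (fun x => `|f x|%:E) < +oo)%E /\
  forall i, (intRd (fun x => `|'D_(evec i) f x|%:E) < +oo)%E.

(* G in L^infty: the library's [bounded_fun] (G is continuous, so ess sup = sup). *)

Definition PL2 (d : nat) : set ('rV[R]_d -> R) :=
  [set rho | borel_fun rho /\ (forall x, 0 <= rho x) /\
             intRd (fun x => (rho x)%:E) = 1%E /\
             (intRd (fun x => (rho x ^+ 2)%:E) < +oo)%E].

Definition energy (d : nat) (eps : R) (G : 'rV[R]_d -> R)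
    (rho : 'rV[R]_d -> R) : \bar R :=
  ((eps / 2)%:E * intRd (fun x => (rho x ^+ 2)%:E)
   - (1 / 2)%:E * intRd (fun x => intRd (fun y =>
                      (G (x - y) * rho x * rho y)%:E)))%E.

End Defs.

(* Main.v *)
Require Import Defs.
From mathcomp Require Import all_boot all_algebra.
From mathcomp Require Import all_classical all_reals all_analysis.
From mathcomp Require Import measurable_realfun.
From mathcomp Require Import ring lra.
Import numFieldNormedType.Exports.
Import order.Order.TTheory GRing.Theory Num.Theory.
Set Implicit Arguments.
Unset Strict Implicit.
Unset Printing Implicit Defensive.
Local Open Scope classical_set_scope.
Local Open Scope ring_scope.

Section Aux.
Variable R : realType.
Local Notation mu := (@lebesgue_measure R).
Local Notation RR := (measurableTypeR R).

Definition upd (x : nat -> R) (n : nat) (t : R) : nat -> R :=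
  fun k => if k == n then t else x k.

Lemma iintS n (f : (nat -> R) -> \bar R) : iint n.+1 f =
  (\int[mu]_t iint n (fun x => f (upd x n t)))%E.
Proof. by []. Qed.

Lemma le_int_any (f g : RR -> \bar R) : (forall x, 0 <= f x)%E ->
  (forall x, f x <= g x)%E -> (\int[mu]_x f x <= \int[mu]_x g x)%E.
Proof.
move=> f0 fg.
have g0 : forall x, (0 <= g x)%E by move=> x; exact: le_trans (f0 x) (fg x).
rewrite (ge0_integralTE _ f0) (ge0_integralTE _ g0).
apply: ereal_sup_le => _ [h hf <-]; exists h => //= x.
exact: le_trans (hf x) (fg x).
Qed.

Lemma iint_ge0 n (f : (nat -> R) -> \bar R) : (forall x, 0 <= f x)%E -> (0 <= iint n f)%E.
Proof.
elim: n f => [|n IH] f f0 //=.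
apply: integral_ge0 => t _; exact: IH.
Qed.

Lemma iint_le n (f g : (nat -> R) -> \bar R) : (forall x, 0 <= f x)%E -> (forall x, f x <= g x)%E ->
  (iint n f <= iint n g)%E.
Proof.
elim: n f g => [|n IH] f g f0 fg //=.
apply: le_int_any => t; first exact: iint_ge0.
exact: IH.
Qed.

Fixpoint JM (n : nat) : forall (dd : measure_display) (T : measurableType dd),
   (T -> (nat -> R) -> R) -> Prop :=
  match n with
  | 0 => fun dd T h => measurable_fun setT (fun t => h t (fun _ => 0))
  | n'.+1 => fun dd T h =>
     @JM n' _ ((T * RR)%type) (fun p x => h p.1 (upd x n' p.2))
  end.
Arguments JM n {dd} T h.

Lemma JM_pcomp n : forall dd (T : measurableType dd) dd' (T' : measurableType dd')
  (k : T' -> T) h, measurable_fun setT k -> JM n T h -> JM n T' (fun t => h (k t)).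
Proof.
elim: n => [|n IH] dd T dd' T' k h mk /=.
  move=> mh; exact: measurableT_comp mh mk.
move=> H.
apply: (IH _ _ _ _ (fun p : T' * RR => (k p.1, p.2)) _ _ H).
apply/measurable_fun_pairP; split => /=.
  exact: measurableT_comp mk measurable_fst.
exact: measurable_snd.
Qed.


Lemma JM_ext n : forall dd (T : measurableType dd) (h h' : T -> (nat -> R) -> R),
  (forall t x, h t x = h' t x) -> JM n T h -> JM n T h'.
Proof.
elim: n => [|n IH] dd T h h' e /=.
  by apply: eq_measurable_fun => t _; rewrite e.
by apply: IH => p x; rewrite e.
Qed.

Lemma JM_cst n : forall dd (T : measurableType dd) (c : T -> R),
  measurable_fun setT c -> JM n T (fun t x => c t).
Proof.
elim: n => [|n IH] dd T c mc //=.
apply: (IH _ _ (fun p : T * RR => c p.1)).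
exact: measurableT_comp mc measurable_fst.
Qed.

Lemma JM_coord n i : forall dd (T : measurableType dd),
  JM n T (fun t x => x i).
Proof.
elim: n => [|n IH] dd T /=.
  exact: measurable_cst.
rewrite /upd; case: eqP => [_|_].
  have := @JM_cst n _ (T * RR)%type (fun p => p.2) measurable_snd.
  exact.
exact: IH.
Qed.

Lemma JM_add n : forall dd (T : measurableType dd) (h1 h2 : T -> (nat -> R) -> R),
  JM n T h1 -> JM n T h2 -> JM n T (fun t x => h1 t x + h2 t x).
Proof.
elim: n => [|n IH] dd T h1 h2 /=.
  move=> m1 m2; exact: measurable_funD.
move=> m1 m2; exact: IH.
Qed.

Lemma JM_mul n : forall dd (T : measurableType dd) (h1 h2 : T -> (nat -> R) -> R),
  JM n T h1 -> JM n T h2 -> JM n T (fun t x => h1 t x * h2 t x).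
Proof.
elim: n => [|n IH] dd T h1 h2 /=.
  move=> m1 m2; exact: measurable_funM.
move=> m1 m2; exact: IH.
Qed.

Lemma JM_comp n (phi : R -> R) : measurable_fun setT phi ->
  forall dd (T : measurableType dd) (h : T -> (nat -> R) -> R),
  JM n T h -> JM n T (fun t x => phi (h t x)).
Proof.
move=> mphi; elim: n => [|n IH] dd T h /=.
  move=> m1; exact: measurableT_comp mphi m1.
move=> m1; exact: IH.
Qed.

Lemma JM_sum n m : forall dd (T : measurableType dd) (F : 'I_m -> T -> (nat -> R) -> R),
  (forall i, JM n T (F i)) -> JM n T (fun t x => \sum_(i < m) F i t x).
Proof.
elim: m => [|m IH] dd T F HF.
  apply: JM_ext (JM_cst n (measurable_cst (0:R))) => t x.
  by rewrite big_ord0.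
apply: JM_ext (JM_add (IH _ _ (fun i => F (widen_ord (leqnSn m) i)) _) (HF ord_max)).
  by move=> t x; rewrite big_ord_recr.
by move=> i; exact: HF.
Qed.

Lemma JM_prod n m : forall dd (T : measurableType dd) (F : 'I_m -> T -> (nat -> R) -> R),
  (forall i, JM n T (F i)) -> JM n T (fun t x => \prod_(i < m) F i t x).
Proof.
elim: m => [|m IH] dd T F HF.
  apply: JM_ext (JM_cst n (measurable_cst (1:R))) => t x.
  by rewrite big_ord0.
apply: JM_ext (JM_mul (IH _ _ (fun i => F (widen_ord (leqnSn m) i)) _) (HF ord_max)).
  by move=> t x; rewrite big_ord_recr.
by move=> i; exact: HF.
Qed.

Lemma JM_meas n : forall dd (T : measurableType dd) (h : T -> (nat -> R) -> R),
  JM n T h -> (forall t x, 0 <= h t x) ->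
  measurable_fun setT ((fun t => iint n (fun x => (h t x)%:E)) : T -> \bar R).
Proof.
elim: n => [|n IH] dd T h /=.
  move=> mh _; exact/measurable_EFinP.
move=> Jh h0.
have mF := IH _ _ _ Jh (fun p x => h0 _ _).
have F0 : forall p : T * RR, (0 <= iint n (fun x => (h p.1 (upd x n p.2))%:E))%E.
  by move=> p; apply: iint_ge0 => x; rewrite lee_fin.
exact: (@measurable_fun_fubini_tonelli_F _ _ T RR R mu _ mF F0).
Qed.


Lemma iint_ext n (f g : (nat -> R) -> \bar R) : (forall x, f x = g x) ->
  iint n f = iint n g.
Proof. by move=> e; congr iint; apply: funext. Qed.

Definition JMf n (f : (nat -> R) -> R) := JM n RR (fun _ => f).

Lemma JMf_upd n f s : JMf n.+1 f -> JMf n (fun x => f (upd x n s)).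
Proof.
rewrite /JMf /= => H.
have := @JM_pcomp n _ (RR * RR)%type _ RR (fun t : RR => (t, s)) _ _ H.
apply; apply/measurable_fun_pairP; split.
  exact: measurable_id.
by rewrite /comp /=; exact: measurable_cst.
Qed.

Lemma JMf_meas n f : JMf n.+1 f -> (forall x, 0 <= f x) ->
  measurable_fun setT
   ((fun s : RR => iint n (fun x => (f (upd x n s))%:E)) : RR -> \bar R).
Proof.
rewrite /JMf /= => H f0.
have H2 : JM n RR (fun t x => f (upd x n t)).
  apply: (@JM_pcomp n _ (RR * RR)%type _ RR (fun t : RR => (t, t)) _ _ H).
  by apply/measurable_fun_pairP; split; exact: measurable_id.
exact: (JM_meas H2).
Qed.

Lemma iint_scale n : forall (f : (nat -> R) -> R) (c : R), 0 <= c -> JMf n f ->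
  (forall x, 0 <= f x) ->
  iint n (fun x => (c * f x)%:E) = (c%:E * iint n (fun x => (f x)%:E))%E.
Proof.
elim: n => [|n IH] f c c0 Jf f0 //=.
transitivity (\int[mu]_t (c%:E * iint n (fun x => (f (upd x n t))%:E)))%E.
  apply: eq_integral => t _; apply: IH => //.
  exact: JMf_upd.
rewrite ge0_integralZl //.
- exact: JMf_meas.
- by move=> t _; apply: iint_ge0 => x; rewrite lee_fin.
Qed.

Definition ind (a b : R) : R -> R := \1_(`[a, b]%classic).

Lemma ind_ge0 a b r : 0 <= ind a b r.
Proof. by rewrite /ind indicE; case: (_ \in _). Qed.

Lemma iint_box n : forall (a b c : R), a <= b -> 0 <= c ->
  iint n (fun x => (c * \prod_(i < n) ind a b (x i))%:E) = (c * (b - a) ^+ n)%:E.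
Proof.
elim: n => [|n IH] a b c ab c0.
  by rewrite /= big_ord0 expr0.
rewrite iintS.
transitivity (\int[mu]_t (((c * (b - a) ^+ n) * \1_(`[a, b]%classic) t)%:E))%E.
  apply: eq_integral => t _.
  rewrite (@iint_ext _ _ (fun x => ((c * ind a b t) * \prod_(i < n) ind a b (x i))%:E)).
    rewrite IH //; last by apply: mulr_ge0 => //; exact: ind_ge0.
    by rewrite /ind mulrAC.
  move=> x; rewrite big_ord_recr /= /upd eqxx.
  rewrite (@eq_bigr _ _ _ _ _ _ _ (fun i : 'I_n => ind a b (x i))); last first.
    by move=> i _ /=; rewrite ifN // neq_ltn ltn_ord.
  by rewrite mulrAC mulrA.
under eq_integral do rewrite EFinM.
rewrite ge0_integralZl //; first last.
- by rewrite lee_fin; apply: mulr_ge0 => //; apply: exprn_ge0; rewrite subr_ge0.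
- apply/measurable_EFinP; exact: measurable_indic.
rewrite integral_indic // setIT.
have := lebesgue_measure_itv `[a, b]. 
move=> /= ->.
rewrite lte_fin; case: ltgtP ab => // [ab _|-> _].
  by rewrite -EFinD -EFinM exprSr mulrA.
by rewrite mule0 subrr expr0n /= mulr0.
Qed.


Lemma refl1 (Phi : RR -> \bar R) (a : R) : measurable_fun setT Phi ->
  (forall t, 0 <= Phi t)%E ->
  (\int[mu]_t Phi (a - t)%R = \int[mu]_t Phi t)%E.
Proof.
move=> mP P0.
pose psi : RR -> RR := fun t => a - t.
have mpsi : measurable_fun setT psi.
  have H : measurable_fun setT (fun t : R => a - t).
    by apply: measurable_funB; [exact: measurable_cst|exact: measurable_id].
  exact: H.
have E : forall A, measurable A -> mu A = pushforward mu psi A.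
  apply: lebesgue_measure_unique => _ [[u v]] _ <-.
  change (mu `]u, v]%classic = mu (psi @^-1` `]u, v]%classic)).
  have -> : psi @^-1` `]u, v]%classic = `[a - v, a - u[%classic.
    apply/seteqP; split => x /=; rewrite !in_itv /= /psi.
      move=> /andP[h1 h2]; apply/andP; split; lra.
    move=> /andP[h1 h2]; apply/andP; split; lra.
  rewrite !lebesgue_measure_itv /= !lte_fin.
  have -> : (a - v < a - u) = (u < v) by apply/idP/idP => h; lra.
  case: (u < v) => //; congr (_%:E); lra.
rewrite [RHS](eq_measure_integral (pushforward mu psi)); last first.
  by move=> A mA _; apply: E.
rewrite ge0_integral_pushforward //.
Qed.

Definition refl (a x : nat -> R) : nat -> R := fun k => a k - x k.

Definition dep n (f : (nat -> R) -> R) :=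
  forall x y, (forall k, (k < n)%N -> x k = y k) -> f x = f y.

Lemma iint_refl n : forall (f : (nat -> R) -> R) (a : nat -> R),
  JMf n f -> (forall x, 0 <= f x) -> dep n f ->
  iint n (fun x => (f (refl a x))%:E) = iint n (fun x => (f x)%:E).
Proof.
elim: n => [|n IH] f a Jf f0 df.
  by rewrite /=; congr (_%:E); apply: df.
rewrite iintS.
transitivity (\int[mu]_t iint n (fun x => (f (upd x n (a n - t)%R))%:E))%E.
  apply: eq_integral => t _.
  rewrite (@iint_ext _ _ (fun x => ((fun y => f (upd y n (a n - t))) (refl a x))%:E)).
    apply: IH.
    - exact: JMf_upd.
    - by move=> x.
    - move=> x y H; apply: df => k kn; rewrite /upd; case: eqP => // kn'.
      apply: H; move: kn; rewrite ltnS leq_eqVlt => /orP[/eqP|] //.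
  move=> x; congr (EFin (f _)); apply: funext => k.
  rewrite /refl /upd; case: eqP => [->|]//.
have := @refl1 (fun s => iint n (fun x => (f (upd x n s))%:E)) (a n).
move=> /= ->; first by [].
- exact: JMf_meas.
- by move=> s; apply: iint_ge0 => x; rewrite lee_fin.
Qed.

Lemma iint_mct n : forall (h : nat -> (nat -> R) -> R) (hl : (nat -> R) -> R),
  (forall k, JMf n (h k)) -> (forall k x, 0 <= h k x) ->
  (forall x, nondecreasing_seq (fun k => h k x)) ->
  (forall x, (fun k => h k x) @ \oo --> hl x) ->
  iint n (fun x => (hl x)%:E) = limn (fun k => iint n (fun x => (h k x)%:E)).
Proof.
elim: n => [|n IH] h hl Jh h0 hnd hc.
  rewrite /= (EFin_lim (f := fun k => h k (fun _ => 0))).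
    by rewrite (cvg_lim _ (hc _)).
  by apply/cvg_ex; exists (hl (fun _ => 0)); exact: hc.
rewrite iintS.
transitivity (\int[mu]_t limn (fun k => iint n (fun x => (h k (upd x n t))%:E)))%E.
  apply: eq_integral => t _.
  apply: (IH (fun k x => h k (upd x n t)) (fun x => hl (upd x n t))).
  - move=> k; exact: JMf_upd.
  - by move=> k x.
  - by move=> x.
  - by move=> x.
rewrite monotone_convergence //.
- move=> k; exact: JMf_meas.
- by move=> k t _; apply: iint_ge0 => x; rewrite lee_fin.
- move=> t _ k1 k2 k12; apply: iint_le => x; rewrite ?lee_fin //.
  exact: hnd.
Qed.

Lemma indE a b r : ind a b r = if (a <= r <= b) then 1 else 0.
Proof. by rewrite /ind indicE mem_setE in_itv /=; case: ifP. Qed.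

Lemma ind_le1 a b r : ind a b r <= 1.
Proof. by rewrite indE; case: ifP. Qed.

Lemma mind a b : measurable_fun setT (ind a b).
Proof. exact: measurable_indic. Qed.

Lemma prod_ind m a b (x : nat -> R) : \prod_(i < m) ind a b (x i) =
  if [forall i : 'I_m, a <= x i <= b] then 1 else 0.
Proof.
case: ifP => [/forallP H|/negbT].
  by apply: big1 => i _; rewrite indE H.
rewrite negb_forall => /existsP[i Hi].
by rewrite (bigD1 i) //= indE (negbTE Hi) mul0r.
Qed.

Lemma prod_indI m a b (x : 'I_m -> R) : \prod_(i < m) ind a b (x i) =
  if [forall i : 'I_m, a <= x i <= b] then 1 else 0.
Proof.
case: ifP => [/forallP H|/negbT].
  by apply: big1 => i _; rewrite indE H.
rewrite negb_forall => /existsP[i Hi].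
by rewrite (bigD1 i) //= indE (negbTE Hi) mul0r.
Qed.

Lemma prod_ind_ge0 m a b (x : nat -> R) : 0 <= \prod_(i < m) ind a b (x i).
Proof. by rewrite prod_ind; case: ifP. Qed.

Lemma prod_ind_le1 m a b (x : nat -> R) : \prod_(i < m) ind a b (x i) <= 1.
Proof. by rewrite prod_ind; case: ifP. Qed.

Lemma JMf_gen n m (phi : R -> R) (psi : 'I_m -> R -> R) (a b : R) :
  measurable_fun setT phi -> (forall i, measurable_fun setT (psi i)) ->
  JMf n (fun z => phi (\sum_(i < m) psi i (z i) ^+ 2) *
                  \prod_(i < m) ind a b (psi i (z i))).
Proof.
move=> mphi mpsi; rewrite /JMf.
have J1 : forall i, JM n RR (fun _ z => psi i (z i)) :=
  fun i => JM_comp (mpsi i) (JM_coord n i RR).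
have J2 : forall i, JM n RR (fun t z => (psi i (z i)) ^+ 2) :=
  fun i => JM_comp (@exprn_measurable R setT 2) (J1 i).
have J3 : forall i, JM n RR (fun t z => ind a b (psi i (z i))) :=
  fun i => JM_comp (mind a b) (J1 i).
exact: (JM_mul (JM_comp mphi (JM_sum J2)) (JM_prod J3)).
Qed.

Lemma mct_part (d : nat) (G : 'rV[R]_d -> R) (phi : R -> R) (eps : R)
  (mphi : measurable_fun setT phi) (G_ge0 : forall x, 0 <= G x)
  (Grow : forall z : nat -> R, G (\row_i z i) = phi (\sum_(i < d) z i ^+ 2))
  (G_int : intRd (fun x => (G x)%:E) = 1%E) (e1 : R) (e1lt1 : e1 < 1) :
  exists k : nat, (e1%:E < iint d (fun z =>
      (G (\row_i z i) * \prod_(i < d) ind (- k%:R) k%:R (z i))%:E))%E.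
Proof.
pose H (k : nat) (z : nat -> R) := G (\row_i z i) * \prod_(i < d) ind (- k%:R) k%:R (z i).
have mid : measurable_fun setT (@idfun R) by exact: measurable_id.
have JH k : JMf d (H k).
  have J := @JMf_gen d d phi (fun _ : 'I_d => idfun) (- k%:R) k%:R mphi
     (fun i => mid).
  rewrite /JMf in J *; apply: JM_ext J => t z.
  by rewrite /H Grow.
have H0 k z : 0 <= H k z by apply: mulr_ge0 => //; exact: prod_ind_ge0.
have Hnd z : nondecreasing_seq (fun k => H k z).
  move=> k1 k2 k12; rewrite /H; apply: ler_wpM2l => //; rewrite !prod_ind.
  have [Hp|Hp] := boolP [forall i : 'I_d, - k1%:R <= z i <= k1%:R].
    rewrite (_ : [forall i : 'I_d, - k2%:R <= z i <= k2%:R] = true) //.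
    apply/forallP => i; move/forallP: Hp => /(_ i) /andP[h1 h2].
    have kk : (k1%:R : R) <= k2%:R by rewrite ler_nat.
    by apply/andP; split; [apply: le_trans h1; rewrite lerN2|exact: le_trans kk].
  by case: ifP.
have Hcvg z : (fun k => H k z) @ \oo --> G (\row_i z i).
  apply: cvg_near_cst.
  pose K := \sum_(i < d) `|z i|.
  exists (Num.Def.trunc K).+1 => // k /= Kk.
  rewrite /H prod_ind ifT ?mulr1 //; apply/forallP => i.
  rewrite -ler_norml.
  apply: (le_trans (y := K)).
    by rewrite /K (bigD1 i) //= lerDl sumr_ge0.
  apply: (le_trans (ltW (truncnS_gt K))).
  by rewrite ler_nat.
have mct := @iint_mct d H (fun z => G (\row_i z i)) JH H0 Hnd Hcvg.
have Gi : iint d (fun z => (G (\row_i z i))%:E) = 1%E by exact: G_int.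
pose u k := iint d (fun x => (H k x)%:E).
have und : nondecreasing_seq u.
  move=> k1 k2 k12; apply: iint_le => x; rewrite ?lee_fin //; exact: Hnd.
have := ereal_nondecreasing_cvgn und => /cvg_lim Hl.
rewrite Gi -/u Hl // in mct.
have : (e1%:E < ereal_sup (range u))%E by rewrite -mct lte_fin.
by case/ereal_sup_gt => _ [k _ <-] Hk; exists k.
Qed.

Lemma bern n (u : R) : 0 <= u -> u <= 1 -> 1 - n%:R * u <= (1 - u) ^+ n.
Proof.
move=> u0 u1; elim: n => [|n IH]; first by rewrite expr0 mul0r subr0.
rewrite exprS -natr1.
have n0 : 0 <= (n%:R : R) by [].
apply: (@le_trans _ _ ((1 - u) * (1 - n%:R * u))).
  nra.
by apply: ler_wpM2l => //; lra.
Qed.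

Lemma num_part (eps M L m c P e1 : R) (d : nat) : (1 <= d)%N ->
  0 < eps -> eps < 1 -> e1 = (1 + eps) / 2 -> e1 < m -> 0 <= M ->
  L = 4 * M * d%:R / (1 - eps) + 1 -> c = (L ^+ d)^-1 -> P = (L - 2 * M) ^+ d ->
  eps / 2 * c < 1 / 2 * (c ^+ 2 * m * P).
Proof.
move=> hd e0 e1' -> me M0 hL -> ->.
have d1 : 1 <= (d%:R : R) by rewrite ler1n.
have d0 : 0 <= (d%:R : R) by [].
have ep : 0 < 1 - eps by lra.
have LE : L * (1 - eps) = 4 * M * d%:R + (1 - eps).
  by rewrite hL mulrDl mulfVK ?mul1r // gt_eqF.
have Lp : 0 < L.
  have : 0 < L * (1 - eps) by rewrite LE; nra.
  by rewrite pmulr_lgt0.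
have Ln : L != 0 by rewrite gt_eqF.
set u := 2 * M / L.
have u0 : 0 <= u by rewrite /u divr_ge0 //; lra.
have uL : u * L = 2 * M by rewrite /u mulfVK.
have du : d%:R * u <= (1 - eps) / 2.
  have : d%:R * u * L <= (1 - eps) / 2 * L.
    rewrite -mulrA uL; nra.
  by rewrite ler_pM2r.
have u1 : u <= 1.
  have : u * L <= 1 * L.
    rewrite uL mul1r.
    have : 0 <= L * eps by apply: mulr_ge0; lra.
    have : M <= M * d%:R by rewrite ler_peMr.
    lra.
  by rewrite ler_pM2r.
set Q := L ^+ d.
have Qp : 0 < Q by rewrite exprn_gt0.
have LM : L - 2 * M = L * (1 - u) by rewrite mulrBr mulr1 [L * u]mulrC uL.
have cP : (1 + eps) / 2 <= Q^-1 * (L - 2 * M) ^+ d.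
  rewrite LM exprMn mulrA mulVf ?gt_eqF // mul1r.
  apply: le_trans (bern d u0 u1); lra.
have cp : 0 < Q^-1 by rewrite invr_gt0.
have Qn : Q != 0 by rewrite gt_eqF.
have -> : eps / 2 / Q = Q^-1 / 2 * eps by field.
have -> : 1 / 2 * (Q^-1 ^+ 2 * m * (L - 2 * M) ^+ d) =
   Q^-1 / 2 * (m * (Q^-1 * (L - 2 * M) ^+ d)) by field.
rewrite ltr_pM2l; last by rewrite divr_gt0.
have e0' : 0 < (1 + eps) / 2 by lra.
have h1 : (1 + eps) / 2 * ((1 + eps) / 2) < m * (Q^-1 * (L - 2 * M) ^+ d).
  apply: (@lt_le_trans _ _ (m * ((1 + eps) / 2))); first by rewrite ltr_pM2r.
  by apply: ler_wpM2l => //; lra.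
apply: le_lt_trans h1; nra.
Qed.

Lemma main_neg (d : nat) (hd : (1 <= d)%N) (G : 'rV[R]_d -> R) (phi : R -> R) (eps : R)
  (mphi : measurable_fun setT phi) (G_ge0 : forall x, 0 <= G x)
  (Grow : forall z : nat -> R, G (\row_i z i) = phi (\sum_(i < d) z i ^+ 2))
  (G_int : intRd (fun x => (G x)%:E) = 1%E) (eps_pos : 0 < eps) (eps_lt1 : eps < 1) :
  exists rho, PL2 rho /\ (energy eps G rho < 0)%E.
Proof.
pose e1 := (1 + eps) / 2.
have e1lt1 : e1 < 1 by rewrite /e1; lra.
have [k Hk] := mct_part eps mphi G_ge0 Grow G_int e1lt1.
pose M : R := k%:R.
have M0 : 0 <= M by [].
pose Hk' (z : nat -> R) := G (\row_i z i) * \prod_(i < d) ind (- M) M (z i).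
have Hk0 z : 0 <= Hk' z by apply: mulr_ge0 => //; exact: prod_ind_ge0.
have mid : measurable_fun setT (@idfun R) by exact: measurable_id.
have JHk : JMf d Hk'.
  have J := @JMf_gen d d phi (fun _ : 'I_d => idfun) (- M) M mphi (fun i => mid).
  rewrite /JMf in J *; apply: JM_ext J => t z.
  by rewrite /Hk' Grow.
have dHk : dep d Hk'.
  move=> x y H; rewrite /Hk'.
  have -> : \row_i x i = \row_i y i :> 'rV[R]_d.
    by apply/matrixP => i j; rewrite !mxE H.
  by congr (_ * _); apply: eq_bigr => i _; rewrite H.
pose u := iint d (fun z => (Hk' z)%:E).
have u0 : (0 <= u)%E by apply: iint_ge0 => z; rewrite lee_fin.
have u1 : (u <= 1)%E.
  rewrite -G_int /intRd; apply: iint_le => z; rewrite ?lee_fin //.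
  by rewrite /Hk' ler_piMr // prod_ind_le1.
pose m := fine u.
have um : u = m%:E.
  by rewrite /m fineK // ge0_fin_numE // (le_lt_trans u1) // ltry.
have me1 : e1 < m by rewrite -lte_fin -um.
pose L := 4 * M * d%:R / (1 - eps) + 1.
have d1 : 1 <= (d%:R : R) by rewrite ler1n.
have ep : 0 < 1 - eps by lra.
have LE : L * (1 - eps) = 4 * M * d%:R + (1 - eps).
  by rewrite /L mulrDl mulfVK ?mul1r // gt_eqF.
have Lp : 0 < L.
  have : 0 < L * (1 - eps) by rewrite LE; nra.
  by rewrite pmulr_lgt0.
have ML : 2 * M <= L.
  have : 0 <= L * eps by apply: mulr_ge0; lra.
  have : M <= M * d%:R by rewrite ler_peMr.
  lra.
pose c := (L ^+ d)^-1.
have c0 : 0 < c by rewrite invr_gt0 exprn_gt0.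
have cL : c * L ^+ d = 1 by rewrite mulVf // gt_eqF // exprn_gt0.
pose rho (v : 'rV[R]_d) := c * \prod_(i < d) ind 0 L (v ord0 i).
have rhorow z : rho (\row_i z i) = c * \prod_(i < d) ind 0 L (z i).
  by rewrite /rho; congr (_ * _); apply: eq_bigr => i _; rewrite mxE.
have rho0 v : 0 <= rho v by apply: mulr_ge0; [exact: ltW|apply: prodr_ge0 => i _; exact: ind_ge0].
have I1 : intRd (fun x => (rho x)%:E) = 1%E.
  rewrite /intRd (@iint_ext _ _ (fun x => (c * \prod_(i < d) ind 0 L (x i))%:E)).
    by rewrite iint_box ?subr0 ?cL //; exact: ltW.
  by move=> x; rewrite rhorow.
have I2 : intRd (fun x => (rho x ^+ 2)%:E) = c%:E.
  rewrite /intRd (@iint_ext _ _ (fun x => (c ^+ 2 * \prod_(i < d) ind 0 L (x i))%:E)).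
    rewrite iint_box ?subr0; [|exact: ltW|exact: exprn_ge0 (ltW c0)].
    by rewrite expr2 -mulrA cL mulr1.
  move=> x; rewrite rhorow exprMn; congr (_ * _)%:E.
  by rewrite prod_ind; case: ifP; rewrite ?expr1n ?expr0n.
have m0 : 0 <= m by apply: le_trans (ltW me1); rewrite /e1; lra.
have Bge : ((c ^+ 2 * m * (L - 2 * M) ^+ d)%:E <=
    intRd (fun x => intRd (fun y => (G (x - y) * rho x * rho y)%:E)))%E.
  have E1 : iint d (fun xs => ((c ^+ 2 * m) * \prod_(i < d) ind M (L - M) (xs i))%:E)
      = (c ^+ 2 * m * (L - 2 * M) ^+ d)%:E.
    rewrite iint_box; first by rewrite (_ : L - M - M = L - 2 * M) //; lra.
      lra.
    by apply: mulr_ge0 => //; apply: exprn_ge0; exact: ltW.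
  rewrite -E1 /intRd; apply: iint_le => xs.
    rewrite lee_fin; apply: mulr_ge0; last exact: prod_ind_ge0.
    by apply: mulr_ge0 => //; apply: exprn_ge0; exact: ltW.
  rewrite prod_ind; case: ifP => Hx; last first.
    rewrite mulr0; apply: iint_ge0 => ys; rewrite lee_fin.
    by apply: mulr_ge0 => //; apply: mulr_ge0.
  rewrite mulr1.
  have rx : rho (\row_i xs i) = c.
    rewrite rhorow prod_ind ifT ?mulr1 //; apply/forallP => i.
    by move/forallP: Hx => /(_ i) /andP[h1 h2]; apply/andP; split; lra.
  pose Hr ys := Hk' (refl xs ys).
  have mpsi : forall i : 'I_d, measurable_fun setT (fun r : R => xs i - r).
    by move=> i; apply: measurable_funB; [exact: measurable_cst|exact: measurable_id].
  have JHr : JMf d Hr.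
    have J := @JMf_gen d d phi (fun (i : 'I_d) (r : R) => xs i - r) (- M) M mphi mpsi.
    rewrite /JMf in J *; apply: JM_ext J => t z.
    by rewrite /Hr /Hk' Grow.
  have step2 : iint d (fun ys => (c ^+ 2 * Hr ys)%:E) = (c ^+ 2 * m)%:E.
    rewrite iint_scale //; last by move=> ys; exact: Hk0.
      by rewrite /Hr (@iint_refl d Hk') // -/u um -EFinM.
    by apply: exprn_ge0; exact: ltW.
  rewrite -step2; apply: iint_le => ys.
    by rewrite lee_fin; apply: mulr_ge0; [apply: exprn_ge0; exact: ltW|exact: Hk0].
  rewrite lee_fin rx /Hr /Hk'.
  have -> : \row_i (refl xs ys) i = \row_i xs i - \row_i ys i :> 'rV[R]_d.
    by apply/matrixP => i j; rewrite !mxE.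
  rewrite prod_ind; case: ifP => Hy; last first.
    by rewrite !mulr0; apply: mulr_ge0 => //; apply: mulr_ge0 => //; exact: ltW.
  have ry : rho (\row_i ys i) = c.
    rewrite rhorow prod_ind ifT ?mulr1 //; apply/forallP => i.
    move/forallP: Hx => /(_ i) /andP[h1 h2]; move/forallP: Hy => /(_ i) /andP[h3 h4].
    by rewrite /refl in h3 h4; apply/andP; split; lra.
  set gg := G _; rewrite ry mulr1 (_ : gg * c * c = c ^+ 2 * gg) //; ring.
have rhoQ v : rho v = if [forall i : 'I_d, 0 <= v ord0 i <= L] then c else 0.
  by rewrite /rho prod_indI; case: ifP; rewrite ?mulr1 ?mulr0.
have Hborel : borel_fun rho.
  move=> B oB.
  pose Q := [set v : 'rV[R]_d | [forall i : 'I_d, 0 <= v ord0 i <= L]].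
  have Qc : closed Q.
    have -> : Q = \bigcap_(i in [set: 'I_d])
        ((fun v : 'rV[R]_d => v ord0 i) @^-1` `[0, L]%classic).
      apply/seteqP; split => v /=.
        by move/forallP => H i _; rewrite /= in_itv /=; exact: H.
      by move=> H; apply/forallP => i; have := H i I; rewrite /= in_itv.
    apply: closed_bigI => i _; apply: preimage_closed.
      by move=> v _; exact: coord_continuous.
    exact: interval_closed.
  have mQc : <<s [set: 'rV[R]_d], open >> (~` Q).
    by apply: sub_sigma_algebra; exact: closed_openC.
  have mQ : <<s [set: 'rV[R]_d], open >> Q.
    by have := sigma_algebraCD mQc; rewrite setTD setCK.
  have m0' : <<s [set: 'rV[R]_d], open >> set0 by exact: sigma_algebra0.
  have mT : <<s [set: 'rV[R]_d], open >> setT.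
    by have := sigma_algebraCD m0'; rewrite setD0.
  case: (pselect (B c)) => Bc; case: (pselect (B 0)) => B0.
  - have -> : rho @^-1` B = setT; last by [].
    apply/seteqP; split => v //= _; rewrite rhoQ; case: ifP => _ //.
  - have -> : rho @^-1` B = Q; last by [].
    apply/seteqP; split => v; rewrite /preimage /Q /= rhoQ; case: ifP => //= _.
  - have -> : rho @^-1` B = ~` Q; last by [].
    apply/seteqP; split => v; rewrite /preimage /Q /= rhoQ; case: ifP => //= _.
  - have -> : rho @^-1` B = set0; last by [].
    apply/seteqP; split => v //=; rewrite rhoQ; case: ifP => _ //.
exists rho; split.
  split; first exact: Hborel.
  split; first exact: rho0.
  split; first exact: I1.
  by rewrite I2 ltry.
rewrite /energy I2 -EFinM subre_lt0 //.
apply: (lt_le_trans _ (lee_wpmul2l _ Bge)); last by rewrite lee_fin.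
rewrite -EFinM lte_fin.
exact: (num_part hd eps_pos eps_lt1 (erefl _) me1 M0 (erefl _) (erefl _) (erefl _)).
Qed.

End Aux.

Unset Implicit Arguments.

Theorem lemma3p7 (R : realType) (d : nat) (hd : (1 <= d)%N)
  (G : 'rV[R]_d -> R) (g : R -> R) (eps : R)
  (G_ge0 : forall x, 0 <= G x)
  (G_supp : closure [set x | G x != 0] = [set: 'rV[R]_d])
  (G_C2 : C2 G) (G_W11 : W11 G) (G_Linf : bounded_fun G)
  (G_radial : forall x, G x = g (enorm x))
  (g_even : forall r, g (- r) = g r)
  (g'_neg : forall r, 0 < r -> derivable g r 1 /\ derive1 g r < 0)
  (g''0_neg : derivable g 0 1 /\ derivable (derive1 g) 0 1 /\
                derive1 (derive1 g) 0 < 0)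
  (g_lim : g r @[r --> +oo] --> 0)
  (G_int : intRd (fun x => (G x)%:E) = 1%E)
  (eps_pos : 0 < eps) (eps_lt1 : eps < 1) :
  (ereal_inf [set energy eps G rho | rho in @PL2 R d] < 0)%E.
Proof.
have gc : forall r, 0 <= r -> {for r, continuous g}.
  move=> r; rewrite le_eqVlt => /predU1P [<-|r0].
    by apply/differentiable_continuous/derivable1_diffP; case: g''0_neg.
  by apply/differentiable_continuous/derivable1_diffP; case: (g'_neg r r0).
pose phi := fun r => g (Num.sqrt r).
have mphi : measurable_fun setT phi.
  apply: continuous_measurable_fun => r; apply: continuous_comp.
    exact: sqrt_continuous.
  by apply: gc; exact: sqrtr_ge0.
have Grow : forall z : nat -> R, G (\row_i z i) = phi (\sum_(i < d) z i ^+ 2).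
  move=> z; rewrite G_radial /enorm /phi; congr (g (Num.sqrt _)).
  by apply: eq_bigr => i _; rewrite mxE.
have [rho [Prho Erho]] := main_neg hd mphi G_ge0 Grow G_int eps_pos eps_lt1.
apply: le_lt_trans Erho; apply: ereal_inf_lbound; by exists rho.
Qed.
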